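(* Let $G$ be a finite connected graph with $\operatorname{diam}(G)\ge 2\operatorname{rad}(G)-1$. Then for any diametral pair of vertices $x,y$ (i.e. $d(x,y)=\operatorname{diam}(G)$), the set $\{x,y\}$ is a minimum radius certificate of $G$. Furthermore, $\operatorname{rad}(G)=\lfloor\frac{d(x,y)+1}{2}\rfloor$.
   Context: $d$ shortest-path distance, $e(v)=\max_u d(v,u)$, $\operatorname{rad}(G)=\min_v e(v)$, $\operatorname{diam}(G)=\max_v e(v)$. A radius certificate is a set $L$ of vertices such that every vertex $u$ has some $z\in L$ with $d(u,z)\ge\operatorname{rad}(G)$; a minimum one is one of smallest cardinality. *)

(* Defs.v *)
From mathcomp Require Import all_boot.
Set Implicit Arguments. Unset Strict Implicit. Unset Printing Implicit Defensive.

Definition simple_graph (T : finType) (e : rel T) : Prop :=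
  symmetric e /\ irreflexive e.

Definition walkb (T : finType) (e : rel T) (n : nat) (u v : T) : bool :=
  [exists p : n.-tuple T, path e u p && (last u p == v)].

Definition connected_graph (T : finType) (e : rel T) : Prop :=
  (exists x : T, True) /\ forall u v : T, exists n, walkb e n u v.

(* shortest-path distance: least number of edges of a walk from u to v
   (searched among 0..#|T|-1, which suffices in a connected graph) *)
Definition dist (T : finType) (e : rel T) (u v : T) : nat :=
  find (fun n => walkb e n u v) (iota 0 #|T|).

Definition ecc (T : finType) (e : rel T) (v : T) : nat :=
  \max_(u : T) dist e v u.

(* radius: min of eccentricities (#|T| is a neutral upper bound, since all
   eccentricities are < #|T| in a connected graph) *)
Definition rad (T : finType) (e : rel T) : nat :=
  \big[minn/#|T|]_(v : T) ecc e v.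

Definition diam (T : finType) (e : rel T) : nat :=
  \max_(v : T) ecc e v.

Definition radius_certificate (T : finType) (e : rel T) (L : {set T}) : Prop :=
  forall u : T, exists2 z, z \in L & rad e <= dist e u z.

Definition min_radius_certificate (T : finType) (e : rel T) (L : {set T}) : Prop :=
  radius_certificate e L /\
  forall L' : {set T}, radius_certificate e L' -> #|L| <= #|L'|.

(* Main.v *)
Require Import Defs.
From mathcomp Require Import all_boot.
From mathcomp Require Import zify.

Section Aux.
Variables (T : finType) (e : rel T).

Lemma dist_le_size u v : dist e u v <= #|T|.
Proof. by rewrite /dist -[X in _ <= X](size_iota 0 #|T|) find_size. Qed.

Lemma dist_walk u v : dist e u v < #|T| -> walkb e (dist e u v) u v.
Proof.
rewrite /dist => H.
have Hs : find (fun n => walkb e n u v) (iota 0 #|T|) < size (iota 0 #|T|).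
  by rewrite size_iota.
have := nth_find 0 (etrans (has_find _ _) Hs).
by rewrite nth_iota.
Qed.

Lemma walk_dist n u v : walkb e n u v -> n < #|T| -> dist e u v <= n.
Proof.
move=> W Hn; rewrite leqNgt; apply/negP => Hlt.
have := before_find 0 Hlt; rewrite nth_iota // add0n W //.
Qed.

Lemma walk_cat m n u c v : walkb e m u c -> walkb e n c v -> walkb e (m + n) u v.
Proof.
move=> /existsP [p /andP [P1 /eqP L1]] /existsP [q /andP [P2 /eqP L2]].
apply/existsP; exists [tuple of p ++ q].
by rewrite /= cat_path last_cat L1 P1 P2 L2 eqxx.
Qed.

Lemma walk_rev n u v : symmetric e -> walkb e n u v -> walkb e n v u.
Proof.
move=> Hs /existsP [p /andP [P1 /eqP L1]].
have Hsz : size (rev (belast u p)) == n by rewrite size_rev size_belast size_tuple.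
apply/existsP; exists (Tuple Hsz) => /=.
apply/andP; split.
  rewrite -L1 rev_path; apply: sub_path P1 => a b; by rewrite Hs.
have E : rcons (rev p) u = v :: rev (belast u p).
  by rewrite -rev_cons lastI rev_rcons L1.
by rewrite -[last _ _]/(last v (v :: rev (belast u p))) -E last_rcons.
Qed.

Lemma dist_sym u v : symmetric e -> dist e u v = dist e v u.
Proof.
move=> Hs; rewrite /dist; apply: eq_find => n.
by apply/idP/idP; apply: walk_rev.
Qed.

Lemma dist_tri u c v : dist e u v <= dist e u c + dist e c v.
Proof.
case: (ltnP (dist e u c) #|T|) => H1; last first.
  by apply: leq_trans (dist_le_size _ _) (leq_trans H1 (leq_addr _ _)).
case: (ltnP (dist e c v) #|T|) => H2; last first.
  by apply: leq_trans (dist_le_size _ _) (leq_trans H2 (leq_addl _ _)).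
case: (ltnP (dist e u c + dist e c v) #|T|) => H3; last first.
  by apply: leq_trans (dist_le_size _ _) H3.
apply: walk_dist H3; apply: walk_cat; exact: dist_walk.
Qed.

Lemma dist_refl z : dist e z z = 0.
Proof.
rewrite /dist; case Hn: #|T| => [|n].
  by move: (max_card (pred1 z)); rewrite card1 Hn.
rewrite /= ifT //; apply/existsP; exists [tuple]; by rewrite /= eqxx.
Qed.

Lemma dist0 u v : 0 < #|T| -> dist e u v = 0 -> u = v.
Proof.
move=> HT H.
have /existsP [p /andP [_ /eqP L]] : walkb e 0 u v.
  by rewrite -H; apply: dist_walk; rewrite H.
by move: L; rewrite (tuple0 p).
Qed.

Lemma rad_center : rad e = #|T| \/ exists c, ecc e c = rad e.
Proof.
rewrite /rad; apply: (big_ind (fun m => m = #|T| \/ exists c, ecc e c = m)).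
- by left.
- move=> a b Ha Hb; rewrite /minn; case: ifP => _; [exact: Ha | exact: Hb].
- by move=> c _; right; exists c.
Qed.

End Aux.

Theorem proposition10 (T : finType) (e : rel T) :
  simple_graph e -> connected_graph e ->
  2 * rad e - 1 <= diam e ->
  forall x y : T, dist e x y = diam e ->
    min_radius_certificate e [set x; y] /\ rad e = (dist e x y + 1) %/ 2.
Proof.
move=> [Hs _] [[w _] _] Hr x y Hd.
have HT : 0 < #|T| by apply/card_gt0P; exists w.
have Hup : dist e x y <= 2 * rad e.
  case: (@rad_center T e) => [-> | [c Hc]].
    by apply: leq_trans (@dist_le_size T e x y) _; lia.
  apply: leq_trans (@dist_tri T e x c y) _.
  rewrite (@dist_sym T e x c Hs) -Hc.
  have h1 : dist e c x <= ecc e c by rewrite /ecc; exact: (@leq_bigmax T (fun u => dist e c u)).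
  have h2 : dist e c y <= ecc e c by rewrite /ecc; exact: (@leq_bigmax T (fun u => dist e c u)).
  lia.
rewrite -Hd in Hr.
have Hcert : radius_certificate e [set x; y].
  move=> u.
  have := @dist_tri T e x u y; rewrite (@dist_sym T e x u Hs) => Ht.
  case: (leqP (rad e) (dist e u x)) => H1.
    by exists x => //; rewrite !inE eqxx.
  exists y; first by rewrite !inE eqxx orbT.
  lia.
split; last by lia.
split => // L' HL'.
rewrite cards2.
have [z Hz _] := HL' x.
case: eqP => [_|Hxy] /=.
  by apply/card_gt0P; exists z.
have Hpos : 0 < rad e.
  have : dist e x y != 0 by apply/eqP => /(@dist0 T e x y HT).
  lia.
have [z' Hz' Hd'] := HL' z.
have Hzz : z != z'.
  apply/eqP => E; move: Hd'; rewrite -E (@dist_refl T e); lia.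
have := subset_leq_card (_ : [set z; z'] \subset L').
rewrite cards2 Hzz; apply.
by apply/subsetP => a; rewrite !inE => /orP [] /eqP ->.
Qed.
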